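(* For every constant $c>0$ there is a constant $K$, depending only on $c$, such that the following holds. Let $G$ be a finite, undirected, connected, unweighted, loop-free graph without multi-edges, let $r\in V(G)$, and let $C_1,\dots,C_l$ be the connected components of the graph obtained from $G$ by deleting $r$. For $i\in\{1,\dots,l\}$ let $V_i=\sum_{j\in\{1,\dots,l\}\setminus\{i\}}|V(C_j)|$. If $V_i\ge c\,|V(G)|$ for all $i\in\{1,\dots,l\}$ (i.e., $V_i=\Theta(|V(G)|)$ for all $i$), then for every $v\in V(G)$, $$\delta_{v\bullet}(r)\le K\cdot\overline{\delta(r)},\qquad\text{where }\ \overline{\delta(r)}=\frac{1}{|V(G)|}\sum_{u\in V(G)}\delta_{u\bullet}(r);$$ that is, the quantity $\mu(r)$ (a value with $\delta_{v\bullet}(r)\le\mu(r)\,\overline{\delta(r)}$ for all $v$) can be taken to be a constant.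
   Context: For $s,t\in V(G)$, $\sigma_{st}$ is the number of shortest paths between $s$ and $t$, and $\sigma_{st}(v)$ is the number of those that pass through $v$ as an internal vertex. The dependency score of $s$ on $v$ is $\delta_{s\bullet}(v)=\sum_{t\in V(G)\setminus\{v,s\}}\frac{\sigma_{st}(v)}{\sigma_{st}}$ for $s\neq v$, and $\delta_{v\bullet}(v)=0$. The paper's statement says ''if for all $i$, $V_i=\Theta(|V(G)|)$, then $\mu(r)$ is a constant''; the claim is the uniform (constant-bounded) reading of this asymptotic statement. *)

(* Defs.v *)
From HB Require Import structures.
From mathcomp Require Import all_boot all_order all_algebra.
Set Implicit Arguments. Unset Strict Implicit. Unset Printing Implicit Defensive.
Import Order.TTheory GRing.Theory Num.Theory.

Section Graphs.
Variable T : finType.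
Variable e : rel T.

Definition simple_graph := symmetric e /\ irreflexive e.
Definition connected_graph := forall x y : T, connect e x y.

Definition walk_set (s t : T) (n : nat) : {set n.-tuple T} :=
  [set p : n.-tuple T | path e s p && (last s p == t)].

(* distance: least n with a walk of length n from s to t (in a connected graph
   this is < #|T|, so searching over iota 0 #|T| suffices) *)
Definition dist (s t : T) : nat :=
  find (fun n => [exists p : n.-tuple T, path e s p && (last s p == t)])
       (iota 0 #|T|).

Definition sigma (s t : T) : nat := #|walk_set s t (dist s t)|.

Definition sigma_via (s t v : T) : nat :=
  #|[set p in walk_set s t (dist s t) | (v \in (p : seq T)) && (v != s) && (v != t)]|.

Local Open Scope ring_scope.

Definition dependency (R : realFieldType) (s v : T) : R :=
  if s == v then 0 else
  \sum_(t | (t != v) && (t != s)) ((sigma_via s t v)%:R / (sigma s t)%:R).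

Definition avg_dependency (R : realFieldType) (v : T) : R :=
  (#|T|%:R)^-1 * \sum_(u : T) dependency R u v.

Definition del_rel (r : T) : rel T := fun x y => [&& e x y, x != r & y != r].

Definition comp_del (r x : T) : {set T} := [set y | (y != r) && connect (del_rel r) x y].

End Graphs.

(* Main.v *)
Require Import Defs.
From HB Require Import structures.
From mathcomp Require Import all_boot all_order all_algebra zify.
Import Order.TTheory GRing.Theory Num.Theory.
Section G.
Variables (T : finType) (e : rel T).

Lemma path_del (r u : T) (p : seq T) :
  u != r -> r \notin p -> path e u p -> path (del_rel e r) u p.
Proof.
elim: p u => [|y p IH] u //= Hu Hr /andP[Heuy Hp].
rewrite in_cons negb_or in Hr; case/andP: Hr => Hry Hrp.
have Hyr : y != r by rewrite eq_sym.
rewrite /del_rel Heuy Hu Hyr /=.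
exact: IH.
Qed.

Lemma exists_walk (u t : T) : connect e u t ->
  exists q : (dist e u t).-tuple T, path e u q && (last u q == t).
Proof.
move/connectP=> [p Hp ->].
case: (shortenP Hp) => p' Hp' Hu _.
set P := (fun n => [exists q : n.-tuple T, path e u q && (last u q == last u p')]).
have HP : has P (iota 0 #|T|).
  apply/hasP; exists (size p').
    rewrite mem_iota /= add0n.
    have := max_card (mem (u :: p')).
    by rewrite (card_uniqP Hu) /=.
  by apply/existsP; exists (in_tuple p'); rewrite Hp' eqxx.
have := nth_find 0 HP.
rewrite nth_iota; last by rewrite -[X in (_ < X)%N](size_iota 0 #|T|) -has_find.
rewrite add0n => /existsP[q Hq]; by exists q.
Qed.

Lemma sigma_gt0 (u t : T) : connect e u t -> (0 < sigma e u t)%N.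
Proof.
move/exists_walk=> [q Hq]; apply/card_gt0P; exists q; by rewrite inE.
Qed.

Lemma sigma_via_cut (u t r : T) : u != r -> t != r ->
  ~~ connect (del_rel e r) u t -> sigma_via e u t r = sigma e u t.
Proof.
move=> Hu Ht Hc; rewrite /sigma_via /sigma; apply: eq_card => p.
rewrite !inE [r == u]eq_sym [r == t]eq_sym Hu Ht !andbT.
case Hw: (path e u p && (last u p == t)) => //=.
apply/negP => /negP Hr; move: Hw => /andP[Hp /eqP Hl].
apply: (negP Hc); apply/connectP; exists p => //.
exact: path_del.
Qed.
End G.
Local Open Scope ring_scope.
Lemma ratio_ge0 (R : realFieldType) (a b : nat) : 0 <= (a%:R / b%:R : R).
Proof. by rewrite divr_ge0. Qed.

Lemma ratio_le1 (R : realFieldType) (a b : nat) : (a <= b)%N -> (a%:R / b%:R : R) <= 1.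
Proof.
move=> Hab; case: (posnP b) => [b0|bp].
  by move: Hab; rewrite b0 leqn0 => /eqP->; rewrite mul0r.
by rewrite ler_pdivrMr ?ltr0n // mul1r ler_nat.
Qed.

Lemma sigma_via_le (T : finType) (e : rel T) s t v : (sigma_via e s t v <= sigma e s t)%N.
Proof. by rewrite /sigma_via /sigma; apply: subset_leq_card; apply/subsetP => p; rewrite inE => /andP[]. Qed.

Lemma dep_ge0 (R : realFieldType) (T : finType) (e : rel T) s v : 0 <= dependency e R s v.
Proof. rewrite /dependency; case: ifP => // _; apply: sumr_ge0 => t _; exact: ratio_ge0. Qed.

Lemma dep_le (R : realFieldType) (T : finType) (e : rel T) s v :
  dependency e R s v <= (#|T|.-1)%:R.
Proof.
rewrite /dependency; case: ifP => _; first by rewrite ler0n.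
apply: le_trans (_ : \sum_(t | t != v) (1 : R) <= _).
  rewrite [X in _ <= X]big_mkcond [X in X <= _]big_mkcond /=.
  apply: ler_sum => t _; case: (t != v) => /=; last by [].
  case: (t != s) => //=; apply: ratio_le1; exact: sigma_via_le.
by rewrite sumr_const -(cardC1 v) /= ; apply: le_refl.
Qed.

Lemma dep_lower (R : realFieldType) (T : finType) (e : rel T) (u r : T) :
  connected_graph e -> u != r ->
  ((#|T| - 1 - #|comp_del e r u|)%N)%:R <= dependency e R u r.
Proof.
move=> Hc Hur; rewrite /dependency (negbTE Hur).
set Q := [pred t | (t != r) && ~~ connect (del_rel e r) u t].
have HQ : #|Q| = (#|T| - 1 - #|comp_del e r u|)%N.
  have H := cardID (mem (comp_del e r u)) (predC1 r).
  rewrite cardC1 in H.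
  have H1 : #|[predI predC1 r & mem (comp_del e r u)]| = #|comp_del e r u|.
    apply: eq_card => t; rewrite !inE; by case: (t != r); case: (connect _ u t).
  have H2 : #|[predD predC1 r & mem (comp_del e r u)]| = #|Q|.
    apply: eq_card => t; rewrite !inE; by case: (t != r); case: (connect _ u t).
  rewrite H1 H2 in H. have Tpos : (0 < #|T|)%N by apply/card_gt0P; exists u.
  lia.
rewrite -HQ -sum1_card natr_sum.
rewrite [X in _ <= X]big_mkcond [X in X <= _]big_mkcond /=.
apply: ler_sum => t _; rewrite !inE.
case Hq: ((t != r) && ~~ connect (del_rel e r) u t).
  move/andP: Hq => [Htr Hct].
  have Htu : t != u.
    by apply: contraNneq Hct => ->; exact: connect0.
  rewrite Htr Htu /= (@sigma_via_cut _ e u t r Hur Htr Hct) divff //.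
  by rewrite pnatr_eq0 -lt0n; apply: sigma_gt0; apply: Hc.
by case: ifP => _ //; apply: ratio_ge0.
Qed.
Theorem theorem2 (R : realFieldType) (c : R) :
  0 < c ->
  exists K : R,
    forall (T : finType) (e : rel T) (r : T),
      simple_graph e -> connected_graph e ->
      (forall x : T, x != r ->
         c * (#|T|%:R) <= ((#|T| - 1 - #|comp_del e r x|)%N)%:R) ->
      forall v : T, dependency e R v r <= K * avg_dependency e R r.
Proof.
move=> c0; exists c^-1 => T e r _ Hc Hcomp v.
have Tpos : (0 < #|T|)%N by apply/card_gt0P; exists r.
have Hsum0 : \sum_(u in predC1 r) (c * #|T|%:R) <= \sum_u dependency e R u r.
  rewrite [X in X <= _]big_mkcond /=.
  apply: ler_sum => u _; rewrite !inE.
  case: ifP => Hu; last exact: dep_ge0.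
  apply: le_trans (Hcomp u Hu) _; exact: dep_lower.
have Hsum : (c * #|T|%:R) * (#|T|.-1)%:R <= \sum_u dependency e R u r.
  by rewrite [_ * #|T|.-1%:R]mulr_natr -(cardC1 r) -sumr_const.
apply: (le_trans (dep_le R T e v r)).
rewrite /avg_dependency ler_pdivlMl // ler_pdivlMl ?ltr0n //.
by rewrite mulrA [_ * c]mulrC.
Qed.
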